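(* Let $n\ge 4$, $N=\{1,\dots,n\}$, fix distinct $i_1,i_2\in N$ and let $\hat N^c=N\setminus\{i_1,i_2\}$. Then the inequality $$\sum_{j\in\hat N^c}\left(x_{i_1j}+x_{ji_1}+x_{ji_2}\right)-x_{i_1i_2}-\sum_{j,j'\in\hat N^c:\,j\ne j'} x_{jj'}\le 3-\frac{(n-4)(n-5)}{2}$$ defines a facet of the weak order polytope $P^n_{WO}$.
   Context: Let $N=\{1,\dots,n\}$ and $A_N=\{(i,j): i,j\in N, i\ne j\}$. A weak order on $N$ is a binary relation $W\subseteq N\times N$ that is reflexive, transitive and total; $(i,j)\in W$ is read ''$i$ is preferred over or tied with $j$''. The characteristic vector of $W$ is $x^W\in\{0,1\}^{A_N}$ with $x^W_{(i,j)}=1$ if $(i,j)\in W$ and $0$ otherwise. The weak order polytope $P^n_{WO}$ is the convex hull of the characteristic vectors of all weak orders on $N$; its points are vectors $x\in\mathbb{R}^{A_N}$ and $x_{ij}$ denotes the coordinate $x_{(i,j)}$. $P^n_{WO}$ has dimension $n(n-1)$. An inequality $\pi x\le\pi_0$ defines a facet of a polytope $P$ if it is valid for $P$ (holds for all $x\in P$) and the face $P\cap\{x:\pi x=\pi_0\}$ is nonempty, proper, and contains $\dim(P)$ affinely independent points. *)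

(* Defs.v *)
From mathcomp Require Import all_boot all_order all_algebra.
Set Implicit Arguments. Unset Strict Implicit. Unset Printing Implicit Defensive.
Import Order.TTheory GRing.Theory Num.Theory.
Local Open Scope ring_scope.

(* N = 'I_n (elements 0..n-1 play the role of 1..n). *)
Definition arc_pred (n : nat) : pred ('I_n * 'I_n)%type := fun p => p.1 != p.2.
Definition arc (n : nat) : finType := {p : 'I_n * 'I_n | @arc_pred n p}.

Definition point (R : realFieldType) (n : nat) := arc n -> R.

(* Coordinate x_{ij}; only meaningful (and only used) when i <> j. *)
Definition xc (R : realFieldType) (n : nat) (x : point R n) (i j : 'I_n) : R :=
  match insub (i, j) : option (arc n) with Some a => x a | None => 0 end.

Definition relN (n : nat) := {ffun 'I_n * 'I_n -> bool}.

Definition is_weak_order (n : nat) (W : relN n) : Prop :=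
  (forall i, W (i, i)) /\
  (forall i j k, W (i, j) -> W (j, k) -> W (i, k)) /\
  (forall i j, W (i, j) || W (j, i)).

Definition charvec (R : realFieldType) (n : nat) (W : relN n) : point R n :=
  fun a => if W (val a) then 1 else 0.

Definition WO_polytope (R : realFieldType) (n : nat) (x : point R n) : Prop :=
  exists lam : relN n -> R,
    (forall W, 0 <= lam W) /\
    (forall W, ~ is_weak_order W -> lam W = 0) /\
    \sum_(W : relN n) lam W = 1 /\
    (forall a, x a = \sum_(W : relN n) lam W * charvec R W a).

Definition aff_indep (R : realFieldType) (n k : nat) (v : 'I_k -> point R n) : Prop :=
  forall c : 'I_k -> R,
    \sum_(i < k) c i = 0 ->
    (forall a, \sum_(i < k) c i * v i a = 0) ->
    forall i, c i = 0.

Definition poly_dim (R : realFieldType) (n : nat) (P : point R n -> Prop) (d : nat) : Prop :=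
  (exists v : 'I_d.+1 -> point R n, (forall i, P (v i)) /\ aff_indep v) /\
  (forall v : 'I_d.+2 -> point R n, (forall i, P (v i)) -> ~ aff_indep v).

Definition is_facet (R : realFieldType) (n : nat) (P : point R n -> Prop)
    (f : point R n -> R) (f0 : R) : Prop :=
  (forall x, P x -> f x <= f0) /\
  (exists x, P x /\ f x = f0) /\
  (exists x, P x /\ f x < f0) /\
  (exists d, poly_dim P d /\
     exists v : 'I_d -> point R n, (forall i, P (v i) /\ f (v i) = f0) /\ aff_indep v).

(* Main.v *)
Require Import Defs.
From mathcomp Require Import all_boot all_order all_algebra.
From mathcomp Require Import ring lra zify.
Set Implicit Arguments. Unset Strict Implicit. Unset Printing Implicit Defensive.
Import Order.TTheory GRing.Theory Num.Theory.
Local Open Scope ring_scope.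


Definition hom (R : realFieldType) n (p : point R n) : 'rV[R]_(#|Defs.arc n|).+1 :=
  \row_k (if unlift ord0 k is Some i then p (enum_val i) else 1).

Definition homs (R : realFieldType) n m (v : 'I_m -> point R n) :=
  \matrix_(i < m, k < (#|Defs.arc n|).+1) hom (v i) 0 k.

Lemma homsM (R : realFieldType) n m (u : 'rV[R]_m) (v : 'I_m -> point R n) k :
  (u *m homs v) 0 k = if unlift ord0 k is Some t then \sum_i u 0 i * v i (enum_val t)
                      else \sum_i u 0 i.
Proof.
rewrite mxE; case: unliftP => [t|] -> ; apply: eq_bigr => i _; rewrite !mxE.
  by rewrite liftK.
by rewrite unlift_none mulr1.
Qed.

Lemma aff_indep_homs (R : realFieldType) n m (v : 'I_m -> point R n) :
  row_free (homs v) -> aff_indep v.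
Proof.
move=> fr c s0 sa.
pose u : 'rV[R]_m := \row_i c i.
have : u *m homs v = 0 *m homs v.
  apply/rowP => k; rewrite mul0mx [RHS]mxE homsM.
  case: unliftP => [t|] _.
    by rewrite -[RHS](sa (enum_val t)); apply: eq_bigr => i _; rewrite mxE.
  by rewrite -[RHS]s0; apply: eq_bigr => i _; rewrite mxE.
move/(row_free_inj fr)/rowP => h i.
by have := h i; rewrite !mxE.
Qed.

Lemma no_big_aff (R : realFieldType) n (v : 'I_(#|Defs.arc n|).+2 -> point R n) :
  ~ aff_indep v.
Proof.
move=> ai.
have nf : ~~ row_free (homs v).
  rewrite /row_free; apply/negP => /eqP h.
  by have := rank_leq_col (homs v); rewrite h ltnn.
rewrite -kermx_eq0 in nf.
have [i ni] : exists i, row i (kermx (homs v)) != 0.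
  apply/existsP; move: nf; apply: contraR; rewrite negb_exists => /forallP h.
  by apply/eqP/row_matrixP => i; rewrite row0; apply/eqP; have := h i; rewrite negbK.
set u := row i _ in ni.
have uv : u *m homs v = 0 by rewrite /u -row_mul mulmx_ker row0.
have: u = 0.
  apply/rowP => j; rewrite [RHS]mxE.
  apply: (ai (fun j => u 0 j)) => [|a].
    by have := congr1 (fun M : 'M[R]_(1, _) => M 0 ord0) uv; rewrite homsM unlift_none mxE.
  have := congr1 (fun M : 'M[R]_(1, _) => M 0 (lift ord0 (enum_rank a))) uv.
  by rewrite homsM liftK enum_rankK mxE.
by move/eqP; rewrite (negbTE ni).
Qed.

Lemma aff_from_rank (R : realFieldType) n m (v : 'I_m -> point R n) k :
  (k <= \rank (homs v))%N -> exists g : 'I_k -> 'I_m, aff_indep (fun i => v (g i)).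
Proof.
move=> hk.
pose f := maxrankfun (homs v).
exists (fun i => f (widen_ord hk i)).
move=> c s0 sa i.
have fr := maxrowsub_free (homs v).
pose c' : 'I_(\rank (homs v)) -> R := fun l => if insub (val l) is Some l' then c l' else 0.
have E : forall (G : 'I_(\rank (homs v)) -> R), (forall l : 'I_(\rank (homs v)), ~~ (l < k)%N -> G l = 0) ->
   \sum_l G l = \sum_(l < k) G (widen_ord hk l).
  move=> G hG; rewrite (bigID (fun l : 'I_(\rank (homs v)) => (l < k)%N)) /=.
  rewrite [X in _ + X = _]big1; last by move=> l /hG.
  by rewrite addr0 (@big_ord_narrow_cond _ _ _ k _ xpredT _ hk).
have c'0 : forall l : 'I_(\rank (homs v)), ~~ (l < k)%N -> c' l = 0.
  by move=> l hl; rewrite /c' insubF //; apply/negbTE.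
have c'w : forall l : 'I_k, c' (widen_ord hk l) = c l.
  by move=> l; rewrite /c' /= valK.
have H : aff_indep (fun l => v (f l)).
  apply: aff_indep_homs.
  have -> : homs (fun l => v (f l)) = rowsub f (homs v).
    by apply/matrixP => a b; rewrite !mxE.
  exact: fr.
move: (H c') => {}H.
rewrite -c'w; apply: H.
  rewrite E; last exact: c'0.
  by rewrite (eq_bigr c (fun l _ => c'w l)).  
move=> a; rewrite E.
  by rewrite -[RHS](sa a); apply: eq_bigr => l _; rewrite c'w.
by move=> l /c'0 ->; rewrite mul0r.
Qed.

Lemma rank_from_ker (R : realFieldType) d m (M : 'M[R]_(m, d.+1)) (y0 : 'rV[R]_d.+1) :
  (forall y : 'rV[R]_d.+1, M *m y^T = 0 -> exists l, y = l *: y0) ->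
  (d <= \rank M)%N.
Proof.
move=> h.
have sub : (kermx M^T <= y0)%MS.
  apply/row_subP => i; apply/sub_rVP; apply: h.
  by apply: trmx_inj; rewrite trmx_mul trmxK trmx0 -row_mul mulmx_ker row0.
have := mxrankS sub; rewrite mxrank_ker mxrank_tr.
have := rank_leq_row y0; have := rank_leq_col M. lia.
Qed.

Lemma rank_from_ker0 (R : realFieldType) d m (M : 'M[R]_(m, d.+1)) :
  (forall y : 'rV[R]_d.+1, M *m y^T = 0 -> y = 0) ->
  (d.+1 <= \rank M)%N.
Proof.
move=> h.
have sub : (kermx M^T <= (0 : 'rV[R]_d.+1))%MS.
  apply/row_subP => i; rewrite (h (row i (kermx M^T))) ?sub0mx //.
  by apply: trmx_inj; rewrite trmx_mul trmxK trmx0 -row_mul mulmx_ker row0.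
have := mxrankS sub; rewrite mxrank_ker mxrank_tr mxrank0.
have := rank_leq_col M. lia.
Qed.


Definition fF (R : realFieldType) n (i1 i2 : 'I_n) (x : point R n) : R :=
       \sum_(j : 'I_n | (j != i1) && (j != i2))
          (xc x i1 j + xc x j i1 + xc x j i2)
       - xc x i1 i2
       - \sum_(j : 'I_n | (j != i1) && (j != i2))
           \sum_(j' : 'I_n | [&& j' != i1, j' != i2 & j != j']) xc x j j'.

Definition f0 (R : realFieldType) n : R := 3 - ((n - 4) * (n - 5))%:R / 2.

Definition GG (R : realFieldType) n (i1 i2 : 'I_n) (x : point R n) : R :=
  \sum_(j : 'I_n | (j != i1) && (j != i2)) (xc x i1 j + xc x j i1 - 1)
  + \sum_(j : 'I_n | (j != i1) && (j != i2)) (xc x j i2 - 1)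
  - xc x i1 i2
  - 2^-1 * \sum_(j : 'I_n | (j != i1) && (j != i2))
           \sum_(j' : 'I_n | [&& j' != i1, j' != i2 & j != j']) (xc x j j' + xc x j' j - 1).

Lemma sum1_cardP (R : realFieldType) n (P : pred 'I_n) :
  \sum_(j | P j) (1 : R) = #|P|%:R.
Proof. by rewrite sumr_const. Qed.

Lemma card_C n (i1 i2 : 'I_n) : i1 != i2 ->
  #|[pred j : 'I_n | (j != i1) && (j != i2)]| = (n - 2)%N.
Proof.
move=> h.
have := cardC1 i1; rewrite card_ord => e1.
have := cardD1 i2 [pred j : 'I_n | j != i1]; rewrite !inE eq_sym h /= => e2.
have -> : #|[pred j : 'I_n | (j != i1) && (j != i2)]| = #|[predD1 [pred j : 'I_n | j != i1] & i2]|.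
  by apply: eq_card => j; rewrite !inE andbC.
have : #|[pred j : 'I_n | j != i1]| = n.-1 by rewrite -e1; apply: eq_card => j; rewrite !inE.
move=> e3; rewrite e3 -subn1 in e2; move: e2. set X := #|_|.  lia.
Qed.

Lemma card_C2 n (i1 i2 j : 'I_n) : i1 != i2 -> j != i1 -> j != i2 ->
  #|[pred j' : 'I_n | [&& j' != i1, j' != i2 & j != j']]| = (n - 3)%N.
Proof.
move=> h h1 h2.
have := card_C h.
have := cardD1 j [pred j' : 'I_n | (j' != i1) && (j' != i2)]; rewrite !inE h1 h2 /=.
have -> : #|[pred j' : 'I_n | [&& j' != i1, j' != i2 & j != j']]| =
          #|[predD1 [pred j' : 'I_n | (j' != i1) && (j' != i2)] & j]|.
  by apply: eq_card => k; rewrite !inE [j == k]eq_sym; case: (k == j); rewrite ?andbF ?andbT.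
move=> e1 e2; rewrite e2 in e1; move: e1; set X := #|_|; lia.
Qed.

Lemma sym_sum (R : realFieldType) n (i1 i2 : 'I_n) (g : 'I_n -> 'I_n -> R) :
  \sum_(j : 'I_n | (j != i1) && (j != i2))
     \sum_(j' : 'I_n | [&& j' != i1, j' != i2 & j != j']) g j' j =
  \sum_(j : 'I_n | (j != i1) && (j != i2))
     \sum_(j' : 'I_n | [&& j' != i1, j' != i2 & j != j']) g j j'.
Proof.
rewrite (exchange_big_dep (fun j : 'I_n => (j != i1) && (j != i2))) /=; last first.
  by move=> i j _ /and3P[-> ->].
apply: eq_bigr => j hj; apply: eq_bigl => k.
by case/andP: hj => -> ->; rewrite [j == k]eq_sym; case: (k != i1); case: (k != i2); case: (k != j).
Qed.

Lemma f0E (R : realFieldType) n : (4 <= n)%N ->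
  f0 R n = 2 * (n%:R - 2) - (n%:R - 2) * (n%:R - 3) / 2.
Proof.
move=> h; rewrite /f0.
have -> : ((n - 4) * (n - 5))%:R = (n%:R - 4) * (n%:R - 5) :> R.
  case: n h => [|[|[|[|[|k]]]]] //= h.
    by rewrite mul0n; ring.
  rewrite natrM !natrB; [|lia|lia]. by [].
by field.
Qed.

Lemma fG (R : realFieldType) n (i1 i2 : 'I_n) (x : point R n) :
  (4 <= n)%N -> i1 != i2 -> fF i1 i2 x - f0 R n = GG i1 i2 x.
Proof.
move=> h4 h12.
rewrite f0E // /fF /GG.
have s1 : \sum_(j : 'I_n | (j != i1) && (j != i2)) (xc x i1 j + xc x j i1 - 1) =
   \sum_(j : 'I_n | (j != i1) && (j != i2)) (xc x i1 j + xc x j i1) - (n%:R - 2).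
  by rewrite sumrB sum1_cardP card_C // natrB; [|lia].
have s2 : \sum_(j : 'I_n | (j != i1) && (j != i2)) (xc x j i2 - 1) =
  \sum_(j : 'I_n | (j != i1) && (j != i2)) xc x j i2 - (n%:R - 2).
  by rewrite sumrB sum1_cardP card_C // natrB; [|lia].
have s3 : \sum_(j : 'I_n | (j != i1) && (j != i2))
   \sum_(j' | [&& j' != i1, j' != i2 & j != j']) (xc x j j' + xc x j' j - 1)
   = 2 * \sum_(j : 'I_n | (j != i1) && (j != i2))
        \sum_(j' | [&& j' != i1, j' != i2 & j != j']) xc x j j'
     - (n%:R - 2) * (n%:R - 3).
  under eq_bigr => j hj.
    have [hj1 hj2] := andP hj.
    rewrite sumrB sum1_cardP card_C2 // big_split /=.
  over.
  rewrite /= sumrB big_split /= sym_sum sumr_const card_C // natrB; last lia.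
  rewrite -[_ *+ (n - 2)]mulr_natr natrB; last lia.
  ring.
rewrite s1 s2 s3 !big_split /=.
by field.
Qed.


Lemma xc_charvec (R : realFieldType) n (W : relN n) (u v : 'I_n) :
  u != v -> xc (charvec R W) u v = (W (u, v))%:R.
Proof. by move=> h; rewrite /xc insubT /charvec /=; case: (W (u, v)). Qed.

Lemma xc_diag (R : realFieldType) n (x : point R n) (u : 'I_n) : xc x u u = 0.
Proof. by rewrite /xc insubF //= /arc_pred /= eqxx. Qed.

Lemma GG_le0 (R : realFieldType) n (i1 i2 : 'I_n) (W : relN n) :
  i1 != i2 -> is_weak_order W -> GG i1 i2 (charvec R W) <= 0.
Proof.
move=> h12 [refl [tr tot]].
pose t u v := W (u, v) && W (v, u).
have tE : forall u v, u != v ->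
    xc (charvec R W) u v + xc (charvec R W) v u - 1 = (t u v)%:R.
  move=> u v huv; rewrite !xc_charvec // 1?eq_sym // /t.
  by have := tot u v; case: (W (u, v)); case: (W (v, u)) => //= _; ring.
have cE : forall u v, u != v -> xc (charvec R W) u v - 1 = - (~~ W (u, v))%:R.
  by move=> u v huv; rewrite xc_charvec //; case: (W (u, v)) => /=; ring.
rewrite /GG.
have E1 : \sum_(j | (j != i1) && (j != i2))
     (xc (charvec R W) i1 j + xc (charvec R W) j i1 - 1) =
     \sum_(j | (j != i1) && (j != i2)) (t i1 j)%:R.
  by apply: eq_bigr => j /andP[hj1 hj2]; rewrite tE // eq_sym.
have E2 : \sum_(j | (j != i1) && (j != i2)) (xc (charvec R W) j i2 - 1) =
     \sum_(j | (j != i1) && (j != i2)) - (~~ W (j, i2))%:R.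
  by apply: eq_bigr => j /andP[hj1 hj2]; rewrite cE.
have E3 : \sum_(j | (j != i1) && (j != i2)) \sum_(j' | [&& j' != i1, j' != i2 & j != j'])
     (xc (charvec R W) j j' + xc (charvec R W) j' j - 1) =
   \sum_(j | (j != i1) && (j != i2)) \sum_(j' | [&& j' != i1, j' != i2 & j != j']) (t j j')%:R.
  apply: eq_bigr => j _; apply: eq_bigr => j' /and3P[_ _ hjj'].
  by rewrite tE.
rewrite E1 E2 E3.
rewrite xc_charvec //=.
set a := \sum_(j | _) (t i1 j)%:R.
set S := \sum_(j | _) \sum_(j' | _) _.
have S0 : 0 <= S by apply: sumr_ge0 => j _; apply: sumr_ge0 => j' _; apply: ler0n.
have N0 : \sum_(j | (j != i1) && (j != i2)) - (~~ W (j, i2))%:R <= 0 :> R.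
  by rewrite sumrN oppr_le0; apply: sumr_ge0 => j _; apply: ler0n.
case h : (W (i1, i2)) => /=.
  have Sge : a * a - a <= S.
    have inner : forall j, (j != i1) && (j != i2) ->
       \sum_(j' | [&& j' != i1, j' != i2 & j != j']) (t i1 j')%:R = a - (t i1 j)%:R :> R.
      move=> j hj; rewrite /a [in RHS](bigD1 j hj) /= addrC addrK.
      apply: eq_bigl => k; rewrite [j == k]eq_sym.
      by case: (k != i1); case: (k != i2); case: (k != j).
    have -> : a * a - a = \sum_(j | (j != i1) && (j != i2))
          (t i1 j)%:R * \sum_(j' | [&& j' != i1, j' != i2 & j != j']) (t i1 j')%:R.
      rewrite (eq_bigr (fun j => (t i1 j)%:R * (a - (t i1 j)%:R))); last first.
        by move=> j hj; rewrite inner.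
      rewrite /a mulr_suml -sumrB; apply: eq_bigr => j _.
      by case: (t i1 j) => /=; ring.
    apply: ler_sum => j hj; rewrite mulr_sumr; apply: ler_sum => j' hj'.
    rewrite /t.
    case e1 : (W (i1, j)); case e2 : (W (j, i1)); rewrite /= ?mul0r //.
    case e3 : (W (i1, j')); case e4 : (W (j', i1)); rewrite /= ?mulr0 //.
    by rewrite (tr _ _ _ e2 e3) (tr _ _ _ e4 e1) /= mulr1.
  have [k ak] : exists k : nat, a = k%:R.
    exists (\sum_(j | (j != i1) && (j != i2)) (t i1 j : nat)); by rewrite natr_sum.
  have key : a - 1 - 2^-1 * (a * a - a) <= 0.
    rewrite ak.
    case: k {ak} => [|[|k]].
    - by rewrite mulr0n; lra.
    - by rewrite mulr1n; lra.
    - have : 2 <= k.+2%:R :> R by rewrite ler_nat.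
      set z := k.+2%:R; move=> hz; nra.
  lra.
have : \sum_(j | (j != i1) && (j != i2)) (t i1 j)%:R
        + \sum_(j | (j != i1) && (j != i2)) - (~~ W (j, i2))%:R <= 0 :> R.
  rewrite -big_split /= -oppr_ge0 -sumrN; apply: sumr_ge0 => j _; rewrite /t.
  case e1 : (W (i1, j)); case e2 : (W (j, i2)); rewrite /= ?andbF /=.
  - by rewrite (tr _ _ _ e1 e2) in h.
  - by case: (W (j, i1)) => /=; rewrite ?subrr ?oppr0 // ?add0r ?opprK.
  - by rewrite subrr oppr0.
  - by rewrite add0r opprK.
rewrite /a; lra.
Qed.


Definition pic (R : realFieldType) n (i1 i2 : 'I_n) (u v : 'I_n) : R :=
  ((u == i1) && ((v != i1) && (v != i2)))%:R
  + (((u != i1) && (u != i2)) && (v == i1))%:R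
  + (((u != i1) && (u != i2)) && (v == i2))%:R
  - ((u == i1) && (v == i2))%:R
  - (((u != i1) && (u != i2)) && [&& v != i1, v != i2 & u != v])%:R.

Lemma dsum (R : realFieldType) n (P : pred 'I_n) (Q : 'I_n -> pred 'I_n) (g : 'I_n -> 'I_n -> R) :
  \sum_u \sum_v (P u && Q u v)%:R * g u v = \sum_(u | P u) \sum_(v | Q u v) g u v.
Proof.
rewrite [RHS]big_mkcond; apply: eq_bigr => u _.
case: (P u) => /=.
  rewrite [RHS]big_mkcond; apply: eq_bigr => v _.
  by case: (Q u v) => /=; rewrite ?mul1r ?mul0r.
by rewrite big1 // => v _; rewrite mul0r.
Qed.

Lemma sum5 (R : realFieldType) n (F1 F2 F3 F4 F5 : 'I_n -> 'I_n -> R) :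
  \sum_u \sum_v (F1 u v + F2 u v + F3 u v - F4 u v - F5 u v) =
  \sum_u \sum_v F1 u v + \sum_u \sum_v F2 u v + \sum_u \sum_v F3 u v
  - \sum_u \sum_v F4 u v - \sum_u \sum_v F5 u v.
Proof.
rewrite -!big_split /= -!sumrB; apply: eq_bigr => u _.
by rewrite -!big_split /= -!sumrB.
Qed.

Lemma fLin (R : realFieldType) n (i1 i2 : 'I_n) (x : point R n) :
  fF i1 i2 x = \sum_u \sum_v pic R i1 i2 u v * xc x u v.
Proof.
rewrite /pic.
under eq_bigr => u _ do under eq_bigr => v _ do rewrite !mulrBl !mulrDl.
rewrite sum5 !dsum !big_pred1_eq.
under [X in _ = _ + X + _ - _ - _]eq_bigr => u _ do rewrite big_pred1_eq.
under [X in _ = _ + _ + X - _ - _]eq_bigr => u _ do rewrite big_pred1_eq.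
rewrite /fF !big_split /=.
by [].
Qed.


Definition rk n (i1 i2 j j' : 'I_n) (a1 a2 b b' : nat) (k : 'I_n) : nat :=
  if k == i1 then a1 else if k == i2 then a2 else if k == j then b
  else if k == j' then b' else (10 + k)%N.

Definition WR n (r : 'I_n -> nat) : relN n := [ffun p => (r p.2 <= r p.1)%N].

Lemma WR_wo n (r : 'I_n -> nat) : is_weak_order (WR r).
Proof.
split; [|split].
- by move=> i; rewrite ffunE.
- move=> i j k; rewrite !ffunE /= => h1 h2; exact: leq_trans h2 h1.
- by move=> i j; rewrite !ffunE /= leq_total.
Qed.

Lemma xc_WR (R : realFieldType) n (r : 'I_n -> nat) u v : u != v ->
  xc (charvec R (WR r)) u v = (r v <= r u)%N%:R.
Proof. by move=> h; rewrite xc_charvec // ffunE. Qed.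

Lemma sum_two (R : realFieldType) n (P : pred 'I_n) (j j' : 'I_n) (h : 'I_n -> R) :
  j != j' -> P j -> P j' -> (forall k, P k -> k != j -> k != j' -> h k = 0) ->
  \sum_(k | P k) h k = h j + h j'.
Proof.
move=> d pj pj' z.
rewrite (bigD1 j) //= (bigD1 j') /=; last by rewrite pj' eq_sym.
rewrite big1 ?addr0 // => k /andP[/andP[pk nj] nj']; exact: z.
Qed.

Lemma sum_one (R : realFieldType) n (P : pred 'I_n) (j : 'I_n) (h : 'I_n -> R) :
  P j -> (forall k, P k -> k != j -> h k = 0) -> \sum_(k | P k) h k = h j.
Proof.
move=> pj z; rewrite (bigD1 j) //= big1 ?addr0 // => k /andP[pk nj]; exact: z.
Qed.

Lemma sum4 (R : realFieldType) n (s1 s2 s3 s4 : 'I_n) (h : 'I_n -> R) :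
  s1 != s2 -> s1 != s3 -> s1 != s4 -> s2 != s3 -> s2 != s4 -> s3 != s4 ->
  (forall k, k != s1 -> k != s2 -> k != s3 -> k != s4 -> h k = 0) ->
  \sum_k h k = h s1 + h s2 + h s3 + h s4.
Proof.
move=> d12 d13 d14 d23 d24 d34 z.
rewrite (bigD1 s1) //= (bigD1 s2) /=; last by rewrite eq_sym d12.
rewrite (bigD1 s3) /=; last by rewrite eq_sym d13 eq_sym d23.
rewrite (bigD1 s4) /=; last by rewrite eq_sym d14 eq_sym d24 eq_sym d34.
rewrite big1 ?addr0 ?addrA // => k /andP[/andP[/andP[n1 n2] n3] n4]; exact: z.
Qed.

Lemma tieE (R : realFieldType) (x y : nat) :
  (x <= y)%N%:R + (y <= x)%N%:R - 1 = (x == y)%:R :> R.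
Proof.
case: (ltngtP x y) => h /=; rewrite ?mulr1n ?mulr0n; lra.
Qed.


Lemma rk1 n (i1 i2 j j' : 'I_n) a1 a2 b b' : rk i1 i2 j j' a1 a2 b b' i1 = a1.
Proof. by rewrite /rk eqxx. Qed.
Lemma rk2 n (i1 i2 j j' : 'I_n) a1 a2 b b' : i2 != i1 -> rk i1 i2 j j' a1 a2 b b' i2 = a2.
Proof. by move=> h; rewrite /rk (negbTE h) eqxx. Qed.
Lemma rk3 n (i1 i2 j j' : 'I_n) a1 a2 b b' : j != i1 -> j != i2 -> rk i1 i2 j j' a1 a2 b b' j = b.
Proof. by move=> h1 h2; rewrite /rk (negbTE h1) (negbTE h2) eqxx. Qed.
Lemma rk4 n (i1 i2 j j' : 'I_n) a1 a2 b b' : j' != i1 -> j' != i2 -> j' != j ->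
  rk i1 i2 j j' a1 a2 b b' j' = b'.
Proof. by move=> h1 h2 h3; rewrite /rk (negbTE h1) (negbTE h2) (negbTE h3) eqxx. Qed.
Lemma rko n (i1 i2 j j' : 'I_n) a1 a2 b b' k : k != i1 -> k != i2 -> k != j -> k != j' ->
  rk i1 i2 j j' a1 a2 b b' k = (10 + k)%N.
Proof. by move=> h1 h2 h3 h4; rewrite /rk (negbTE h1) (negbTE h2) (negbTE h3) (negbTE h4). Qed.
Lemma rk_small n (i1 i2 j j' : 'I_n) a1 a2 b b' k :
  (a1 < 10)%N -> (a2 < 10)%N -> (b < 10)%N -> (b' < 10)%N ->
  (rk i1 i2 j j' a1 a2 b b' k < 10)%N \/ rk i1 i2 j j' a1 a2 b b' k = (10 + k)%N.
Proof.
move=> *; rewrite /rk.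
by case: (k == i1); [left|case: (k == i2); [left|case: (k == j); [left|case: (k == j'); [left|right]]]].
Qed.

Lemma neq10 (x y : nat) : (x < 10)%N -> ((x == 10 + y)%N = false) /\ ((10 + y == x)%N = false).
Proof. move=> h; split; apply/negbTE; lia. Qed.

Lemma GG_rk (R : realFieldType) n (i1 i2 j j' : 'I_n) a1 a2 b b' :
  i1 != i2 -> j != i1 -> j != i2 -> j' != i1 -> j' != i2 -> j != j' ->
  (a1 < 10)%N -> (a2 < 10)%N -> (b < 10)%N -> (b' < 10)%N ->
  GG i1 i2 (charvec R (WR (rk i1 i2 j j' a1 a2 b b'))) =
  (a1 == b)%:R + (a1 == b')%:R - (~~ (a2 <= b)%N)%:R - (~~ (a2 <= b')%N)%:R
  - (a2 <= a1)%N%:R - (b == b')%:R.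
Proof.
move=> h12 hj1 hj2 hk1 hk2 hjk ha1 ha2 hb hb'.
set r := rk i1 i2 j j' a1 a2 b b'.
have h21 : i2 != i1 by rewrite eq_sym.
have hkj : j' != j by rewrite eq_sym.
have r1 : r i1 = a1 by rewrite /r rk1.
have r2 : r i2 = a2 by rewrite /r rk2.
have r3 : r j = b by rewrite /r rk3.
have r4 : r j' = b' by rewrite /r rk4.
have ro : forall k, k != i1 -> k != i2 -> k != j -> k != j' -> r k = (10 + k)%N.
  by move=> k *; rewrite /r rko.
have rs : forall l, (r l < 10)%N \/ r l = (10 + l)%N.
  by move=> l; apply: rk_small.
clearbody r.
rewrite /GG.
have pj : (j != i1) && (j != i2) by rewrite hj1 hj2.
have pj' : (j' != i1) && (j' != i2) by rewrite hk1 hk2.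
rewrite (@sum_two _ _ _ j j') //; last first.
  move=> k /andP[k1 k2] kj kj'.
  rewrite !xc_WR // 1?eq_sym // (ro k) // r1 tieE.
  by case: (neq10 k ha1) => e1 e2; rewrite ?e1 ?e2.
rewrite [X in _ + X - _ - _](@sum_two _ _ _ j j') //; last first.
  move=> k /andP[k1 k2] kj kj'.
  rewrite !xc_WR // (ro k) // r2.
  have -> : (a2 <= 10 + k)%N by rewrite (leq_trans (ltnW ha2)) // leq_addr.
  by rewrite mulr1n subrr.
rewrite [X in _ - _ * X](@sum_two _ _ _ j j') //; last first.
  move=> k /andP[k1 k2] kj kj'.
  apply: big1 => l /and3P[l1 l2 kl].
  rewrite !xc_WR // 1?eq_sym // tieE.
  rewrite (ro k) //.
  case: (rs l) => [hl|hl].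
    by case: eqP => [e|_] //; move: hl; rewrite e ltnNge leq_addr.
  case: eqP => [e|_] //; exfalso.
  have : val k = val l by apply/(@addnI 10); rewrite -e hl.
  by move/val_inj => e'; rewrite e' eqxx in kl.
rewrite (@sum_one _ _ _ j'); last first.
  move=> l /and3P[l1 l2 jl] lj'.
  rewrite !xc_WR // 1?eq_sym // tieE r3.
  case: (eqVneq l j) => [e|lj]; first by rewrite e eqxx in jl.
  rewrite (ro l) //.
  by case: (neq10 l hb) => e1 e2; rewrite ?e1 ?e2.
  by rewrite hk1 hk2.
rewrite (@sum_one _ _ _ j); last first.
  move=> l /and3P[l1 l2 jl] lj.
  rewrite !xc_WR // 1?eq_sym // tieE r4.
  case: (eqVneq l j') => [e|lj']; first by rewrite e eqxx in jl.
  rewrite (ro l) //.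
  by case: (neq10 l hb') => e1 e2; rewrite ?e1 ?e2.
  by rewrite hj1 hj2 hkj.
rewrite !xc_WR // 1?eq_sym // !tieE r1 r2 r3 r4.
have h2 : forall z : R, 2^-1 * (z + z) = z by move=> z; field.
rewrite [(b' == b)]eq_sym h2 ?[b == a1]eq_sym ?[b' == a1]eq_sym.
case: (a2 <= b)%N; case: (a2 <= b')%N; rewrite /= ?mulr1n ?mulr0n; lra.
Qed.


Definition TF (R : realFieldType) n (cc : 'I_n -> 'I_n -> R) (r : 'I_n -> nat) : R :=
  \sum_u \sum_v cc u v * (r v <= r u)%N%:R.

Lemma TF_charvec (R : realFieldType) n (cc : 'I_n -> 'I_n -> R) (r : 'I_n -> nat) :
  (forall u, cc u u = 0) ->
  \sum_u \sum_v cc u v * xc (charvec R (WR r)) u v = TF cc r.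
Proof.
move=> d; apply: eq_bigr => u _; apply: eq_bigr => v _.
case: (eqVneq u v) => [->|h]; first by rewrite d !mul0r.
by rewrite xc_WR.
Qed.

Definition dd (R : realFieldType) n (cc : 'I_n -> 'I_n -> R) (r r' : 'I_n -> nat) u v : R :=
  cc u v * ((r v <= r u)%N%:R - (r' v <= r' u)%N%:R).

Lemma TF_diff (R : realFieldType) n (cc : 'I_n -> 'I_n -> R) (r r' : 'I_n -> nat)
   (s1 s2 s3 s4 : 'I_n) :
  s1 != s2 -> s1 != s3 -> s1 != s4 -> s2 != s3 -> s2 != s4 -> s3 != s4 ->
  (forall k, k != s1 -> k != s2 -> k != s3 -> k != s4 -> r k = r' k /\ (10 <= r k)%N) ->
  (forall k, k == s1 \/ k == s2 \/ k == s3 \/ k == s4 -> (r k < 10)%N /\ (r' k < 10)%N) ->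
  TF cc r - TF cc r' =
  (dd cc r r' s1 s1 + dd cc r r' s1 s2 + dd cc r r' s1 s3 + dd cc r r' s1 s4)
  + (dd cc r r' s2 s1 + dd cc r r' s2 s2 + dd cc r r' s2 s3 + dd cc r r' s2 s4)
  + (dd cc r r' s3 s1 + dd cc r r' s3 s2 + dd cc r r' s3 s3 + dd cc r r' s3 s4)
  + (dd cc r r' s4 s1 + dd cc r r' s4 s2 + dd cc r r' s4 s3 + dd cc r r' s4 s4).
Proof.
move=> d12 d13 d14 d23 d24 d34 out ins.
have inS : forall k, ~~ [&& k != s1, k != s2, k != s3 & k != s4] ->
    k == s1 \/ k == s2 \/ k == s3 \/ k == s4.
  move=> k; case: (k == s1); case: (k == s2); case: (k == s3); case: (k == s4); by auto.
rewrite /TF -sumrB.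
have -> : \sum_u (\sum_v cc u v * (r v <= r u)%N%:R - \sum_v cc u v * (r' v <= r' u)%N%:R)
   = \sum_u \sum_v dd cc r r' u v.
  by apply: eq_bigr => u _; rewrite -sumrB; apply: eq_bigr => v _; rewrite /dd mulrBr.
rewrite (sum4 (s1:=s1) (s2:=s2) (s3:=s3) (s4:=s4)) //; last first.
  move=> u u1 u2 u3 u4; apply: big1 => v _.
  have [e hu] := out u u1 u2 u3 u4.
  rewrite /dd e.
  case: (boolP [&& v != s1, v != s2, v != s3 & v != s4]) => [/and4P[v1 v2 v3 v4]|/inS hv].
    by have [-> _] := out v v1 v2 v3 v4; rewrite subrr mulr0.
  have [h1 h2] := ins v hv.
  rewrite e in hu.
  have -> : (r v <= r' u)%N by apply: ltnW; apply: leq_trans h1 hu.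
  have -> : (r' v <= r' u)%N by apply: ltnW; apply: leq_trans h2 hu.
  by rewrite subrr mulr0.
have inner : forall u, (u == s1 \/ u == s2 \/ u == s3 \/ u == s4) ->
   \sum_v dd cc r r' u v = dd cc r r' u s1 + dd cc r r' u s2 + dd cc r r' u s3 + dd cc r r' u s4.
  move=> u hu; apply: sum4 => // v v1 v2 v3 v4.
  have [e hv] := out v v1 v2 v3 v4.
  have [h1 h2] := ins u hu.
  rewrite /dd e.
  have -> : (r' v <= r u)%N = false by apply/negbTE; rewrite -ltnNge; apply: leq_trans h1 _; rewrite -e.
  have -> : (r' v <= r' u)%N = false by apply/negbTE; rewrite -ltnNge; apply: leq_trans h2 _; rewrite -e.
  by rewrite subrr mulr0.
rewrite !inner; auto.
Qed.

Lemma exC n (i1 i2 : 'I_n) : (4 <= n)%N -> i1 != i2 ->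
  exists j, (j != i1) && (j != i2).
Proof.
move=> h4 h; have := card_C h.
have : (0 < n - 2)%N by lia.
move=> hp e; rewrite -e in hp.
by case/card_gt0P: hp => j; rewrite inE => hj; exists j.
Qed.

Lemma exC2 n (i1 i2 j : 'I_n) : (4 <= n)%N -> i1 != i2 -> j != i1 -> j != i2 ->
  exists j', [&& j' != i1, j' != i2 & j != j'].
Proof.
move=> h4 h h1 h2; have := card_C2 h h1 h2.
have : (0 < n - 3)%N by lia.
move=> hp e; rewrite -e in hp.
by case/card_gt0P: hp => j'; rewrite inE => hj; exists j'.
Qed.

Lemma core (R : realFieldType) n (i1 i2 : 'I_n) (cc : 'I_n -> 'I_n -> R) (c0 : R) :
  (4 <= n)%N -> i1 != i2 -> (forall u, cc u u = 0) ->
  (forall W : relN n, is_weak_order W -> GG i1 i2 (charvec R W) = 0 ->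
       \sum_u \sum_v cc u v * xc (charvec R W) u v = c0) ->
  (forall u v, cc u v = - cc i1 i2 * pic R i1 i2 u v) /\ c0 = - cc i1 i2 * f0 R n.
Proof.
move=> h4 h12 cd Hyp.
have h21 : i2 != i1 by rewrite eq_sym.
have T : forall j j' a1 a2 b b', j != i1 -> j != i2 -> j' != i1 -> j' != i2 -> j != j' ->
    (a1 < 10)%N -> (a2 < 10)%N -> (b < 10)%N -> (b' < 10)%N ->
    ((a1 == b) + (a1 == b') == (~~ (a2 <= b)) + (~~ (a2 <= b')) + (a2 <= a1) + (b == b'))%N ->
    TF cc (rk i1 i2 j j' a1 a2 b b') = c0.
  move=> j j' a1 a2 b b' hj1 hj2 hk1 hk2 hjk ha1 ha2 hb hb' /eqP e.
  rewrite -TF_charvec //; apply: Hyp; first exact: WR_wo.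
  rewrite GG_rk //.
  have := congr1 (fun k : nat => k%:R : R) e; rewrite !natrD => e'.
  lra.
have Dif : forall j j' a1 a2 b b' a1' a2' c c', j != i1 -> j != i2 -> j' != i1 -> j' != i2 -> j != j' ->
    (a1 < 10)%N -> (a2 < 10)%N -> (b < 10)%N -> (b' < 10)%N ->
    (a1' < 10)%N -> (a2' < 10)%N -> (c < 10)%N -> (c' < 10)%N ->
    let r := rk i1 i2 j j' a1 a2 b b' in let r' := rk i1 i2 j j' a1' a2' c c' in
    TF cc r - TF cc r' =
  (dd cc r r' i1 i1 + dd cc r r' i1 i2 + dd cc r r' i1 j + dd cc r r' i1 j')
  + (dd cc r r' i2 i1 + dd cc r r' i2 i2 + dd cc r r' i2 j + dd cc r r' i2 j')
  + (dd cc r r' j i1 + dd cc r r' j i2 + dd cc r r' j j + dd cc r r' j j')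
  + (dd cc r r' j' i1 + dd cc r r' j' i2 + dd cc r r' j' j + dd cc r r' j' j').
  move=> j j' a1 a2 b b' a1' a2' c c' hj1 hj2 hk1 hk2 hjk ha1 ha2 hb hb' ha1' ha2' hc hc' r r'.
  apply: TF_diff => //; rewrite 1?eq_sym // /r /r'.
  - move=> k k1 k2 k3 k4; rewrite !rko //; split => //; exact: leq_addr.
  - move=> k [/eqP->|[/eqP->|[/eqP->|/eqP->]]].
    + by rewrite !rk1.
    + by rewrite !rk2.
    + by rewrite !rk3.
    + by rewrite !rk4 // eq_sym.
have Q : forall j j' a1 a2 b b' a1' a2' c c', j != i1 -> j != i2 -> j' != i1 -> j' != i2 -> j != j' ->
    (a1 < 10)%N -> (a2 < 10)%N -> (b < 10)%N -> (b' < 10)%N ->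
    (a1' < 10)%N -> (a2' < 10)%N -> (c < 10)%N -> (c' < 10)%N ->
    ((a1 == b) + (a1 == b') == (~~ (a2 <= b)) + (~~ (a2 <= b')) + (a2 <= a1) + (b == b'))%N ->
    ((a1' == c) + (a1' == c') == (~~ (a2' <= c)) + (~~ (a2' <= c')) + (a2' <= a1') + (c == c'))%N ->
    let D x y x' y' := ((y <= x)%N%:R - (y' <= x')%N%:R : R) in
    0 = 
  (cc i1 i2 * D a1 a2 a1' a2' + cc i1 j * D a1 b a1' c + cc i1 j' * D a1 b' a1' c')
  + (cc i2 i1 * D a2 a1 a2' a1' + cc i2 j * D a2 b a2' c + cc i2 j' * D a2 b' a2' c')
  + (cc j i1 * D b a1 c a1' + cc j i2 * D b a2 c a2' + cc j j' * D b b' c c')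
  + (cc j' i1 * D b' a1 c' a1' + cc j' i2 * D b' a2 c' a2' + cc j' j * D b' b c' c).
  move=> j j' a1 a2 b b' a1' a2' c c' hj1 hj2 hk1 hk2 hjk ha1 ha2 hb hb' ha1' ha2' hc hc' t1 t2 D.
  have := Dif j j' a1 a2 b b' a1' a2' c c' hj1 hj2 hk1 hk2 hjk ha1 ha2 hb hb' ha1' ha2' hc hc'.
  rewrite /= (T j j' a1 a2 b b') // (T j j' a1' a2' c c') // subrr => ->.
  have hkj : j' != j by rewrite eq_sym.
  rewrite /dd !cd !mul0r !rk1 !rk2 ?rk3 ?rk4 //.
  rewrite /D; ring.
have E1 : forall j j', j != i1 -> j != i2 -> j' != i1 -> j' != i2 -> j != j' -> cc i2 j = 0.
  move=> j j' hj1 hj2 hk1 hk2 hjk.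
  have := Q j j' 0 1 2 9 0 1 1 9 hj1 hj2 hk1 hk2 hjk isT isT isT isT isT isT isT isT isT isT.
  rewrite /= ?mulr0n ?mulr1n; lra.
have E4 : forall j j', j != i1 -> j != i2 -> j' != i1 -> j' != i2 -> j != j' -> cc i2 i1 + cc i2 j = 0.
  move=> j j' hj1 hj2 hk1 hk2 hjk.
  have := Q j j' 1 1 1 9 1 0 1 9 hj1 hj2 hk1 hk2 hjk isT isT isT isT isT isT isT isT isT isT.
  rewrite /= ?mulr0n ?mulr1n; lra.
have E2 : forall j j', j != i1 -> j != i2 -> j' != i1 -> j' != i2 -> j != j' -> cc j' i1 + cc j' j = 0.
  move=> j j' hj1 hj2 hk1 hk2 hjk.
  have := Q j j' 2 0 2 1 2 0 2 2 hj1 hj2 hk1 hk2 hjk isT isT isT isT isT isT isT isT isT isT.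
  rewrite /= ?mulr0n ?mulr1n; lra.
have E3 : forall j j', j != i1 -> j != i2 -> j' != i1 -> j' != i2 -> j != j' -> cc i1 j' + cc j j' = 0.
  move=> j j' hj1 hj2 hk1 hk2 hjk.
  have := Q j j' 1 0 1 2 1 0 1 1 hj1 hj2 hk1 hk2 hjk isT isT isT isT isT isT isT isT isT isT.
  rewrite /= ?mulr0n ?mulr1n; lra.
have E6a : forall j j', j != i1 -> j != i2 -> j' != i1 -> j' != i2 -> j != j' -> cc i1 i2 + cc j i2 = 0.
  move=> j j' hj1 hj2 hk1 hk2 hjk.
  have := Q j j' 0 1 0 9 0 0 0 9 hj1 hj2 hk1 hk2 hjk isT isT isT isT isT isT isT isT isT isT.
  rewrite /= ?mulr0n ?mulr1n; lra.
have E6b : forall j j', j != i1 -> j != i2 -> j' != i1 -> j' != i2 -> j != j' -> cc j i2 - cc i1 j = 0.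
  move=> j j' hj1 hj2 hk1 hk2 hjk.
  have := Q j j' 0 1 0 9 0 1 1 9 hj1 hj2 hk1 hk2 hjk isT isT isT isT isT isT isT isT isT isT.
  rewrite /= ?mulr0n ?mulr1n; lra.
set p := cc i1 i2.
have Ha : forall v, v != i1 -> v != i2 -> cc i1 v = - p.
  move=> v v1 v2; have [w /and3P[w1 w2 vw]] := exC2 h4 h12 v1 v2.
  have := E6a v w v1 v2 w1 w2 vw; have := E6b v w v1 v2 w1 w2 vw; rewrite /p; lra.
have Hg : forall v, v != i1 -> v != i2 -> cc v i2 = - p.
  move=> v v1 v2; have [w /and3P[w1 w2 vw]] := exC2 h4 h12 v1 v2.
  have := E6a v w v1 v2 w1 w2 vw; rewrite /p; lra.
have Hd : forall v, v != i1 -> v != i2 -> cc i2 v = 0.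
  move=> v v1 v2; have [w /and3P[w1 w2 vw]] := exC2 h4 h12 v1 v2.
  exact: (E1 v w).
have Hq : cc i2 i1 = 0.
  have [v /andP[v1 v2]] := exC h4 h12.
  have [w /and3P[w1 w2 vw]] := exC2 h4 h12 v1 v2.
  have := E4 v w v1 v2 w1 w2 vw; rewrite (Hd v) //; lra.
have Hb : forall u, u != i1 -> u != i2 -> cc u i1 = - p.
  move=> u u1 u2; have [w /and3P[w1 w2 uw]] := exC2 h4 h12 u1 u2.
  have wu : w != u by rewrite eq_sym.
  have := E2 w u w1 w2 u1 u2 wu; have := E3 u w u1 u2 w1 w2 uw; have := Ha w w1 w2; lra.
have Hc : forall u v, u != i1 -> u != i2 -> v != i1 -> v != i2 -> u != v -> cc u v = p.
  move=> u v u1 u2 v1 v2 uv.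
  have := E3 u v u1 u2 v1 v2 uv; have := Ha v v1 v2; lra.
have Hpi0 : forall u v, cc u v = - p * pic R i1 i2 u v.
  move=> u v.
  case: (eqVneq u v) => [<-|uv].
    rewrite cd /pic; case: (eqVneq u i1) => [->|u1].
      by rewrite ?eqxx ?(negbTE h12) ?(negbTE h21) /= ?mulr0n ?mulr1n; lra.
    case: (eqVneq u i2) => [->|u2].
      by rewrite ?eqxx ?(negbTE h12) ?(negbTE h21) /= ?mulr0n ?mulr1n; lra.
    by rewrite ?(negbTE u1) ?(negbTE u2) ?eqxx /= ?mulr0n; lra.
  rewrite /pic.
  case: (eqVneq u i1) => [eu|u1].
    subst u; case: (eqVneq v i2) => [->|v2].
      by rewrite ?eqxx ?(negbTE h21) ?(negbTE h12) /= ?mulr0n ?mulr1n; rewrite /p; lra.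
    have v1 : v != i1 by rewrite eq_sym.
    by rewrite ?eqxx ?(negbTE v1) ?(negbTE v2) /= ?mulr0n ?mulr1n (Ha v) //; lra.
  case: (eqVneq u i2) => [eu|u2].
    subst u; case: (eqVneq v i1) => [->|v1].
      by rewrite ?eqxx ?(negbTE h21) ?(negbTE h12) /= ?mulr0n ?mulr1n Hq; lra.
    have v2 : v != i2 by rewrite eq_sym.
    by rewrite ?eqxx ?(negbTE v1) ?(negbTE v2) ?(negbTE h21) ?(negbTE h12) /= ?mulr0n ?mulr1n (Hd v) //; lra.
  rewrite ?(negbTE u1) ?(negbTE u2) /=.
  case: (eqVneq v i1) => [->|v1].
    by rewrite ?eqxx ?(negbTE h21) ?(negbTE h12) /= ?mulr0n ?mulr1n (Hb u) //; lra.
  case: (eqVneq v i2) => [->|v2].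
    by rewrite ?eqxx ?(negbTE h12) ?(negbTE h21) /= ?mulr0n ?mulr1n (Hg u) //; lra.
  by rewrite ?(negbTE v1) ?(negbTE v2) ?uv /= ?mulr0n ?mulr1n (Hc u v) //; lra.
have Hpi := Hpi0.
split; first exact: Hpi.
have [j /andP[hj1 hj2]] := exC h4 h12.
have [j' /and3P[hk1 hk2 hjk]] := exC2 h4 h12 hj1 hj2.
have e := T j j' 0 1 2 9 hj1 hj2 hk1 hk2 hjk isT isT isT isT isT.
rewrite -TF_charvec // in e.
rewrite -e.
under eq_bigr => u _ do under eq_bigr => v _ do rewrite Hpi -mulrA.
under eq_bigr => u _ do rewrite -mulr_sumr.
rewrite -mulr_sumr -fLin.
have := fG (R := R) (charvec R (WR (rk i1 i2 j j' 0 1 2 9))) h4 h12.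
rewrite GG_rk //= ?mulr0n ?mulr1n.
move=> H; have -> : fF i1 i2 (charvec R (WR (rk i1 i2 j j' 0 1 2 9))) = f0 R n by lra.
by [].
Qed.


Definition ccy (R : realFieldType) n (y : 'rV[R]_(#|Defs.arc n|).+1) (u v : 'I_n) : R :=
  match insub (u, v) : option (Defs.arc n) with
  | Some a => y 0 (lift ord0 (enum_rank a)) | None => 0 end.

Lemma ccy_diag (R : realFieldType) n (y : 'rV[R]_(#|Defs.arc n|).+1) u : ccy y u u = 0.
Proof. by rewrite /ccy insubF //= /arc_pred /= eqxx. Qed.

Lemma ccy_arc (R : realFieldType) n (y : 'rV[R]_(#|Defs.arc n|).+1) (a : Defs.arc n) :
  ccy y (val a).1 (val a).2 = y 0 (lift ord0 (enum_rank a)).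
Proof.
case: a => [[u v] h] /=; rewrite /ccy (insubT _ h) /=.
by congr (y 0 (lift ord0 (enum_rank _))); apply: val_inj.
Qed.

Lemma xc_arc (R : realFieldType) n (x : point R n) (a : Defs.arc n) :
  xc x (val a).1 (val a).2 = x a.
Proof.
case: a => [[u v] h] /=; rewrite /xc (insubT _ h) /=.
by congr (x _); apply: val_inj.
Qed.

Lemma sum_arc (R : realFieldType) n (g : 'I_n * 'I_n -> R) :
  \sum_(a : Defs.arc n) g (val a) = \sum_(p : 'I_n * 'I_n | p.1 != p.2) g p.
Proof.
symmetry.
rewrite (reindex_omap (val : Defs.arc n -> _) insub); last first.
  by move=> i Pi; rewrite insubT.
apply: eq_bigl => -[i iA] /=. rewrite insubT /= eqxx andbT. exact: iA.
Qed.

Lemma homs_y (R : realFieldType) n m (v : 'I_m -> point R n) (y : 'rV[R]_(#|Defs.arc n|).+1) l :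
  (homs v *m y^T) l 0 = y 0 ord0 + \sum_u \sum_w ccy y u w * xc (v l) u w.
Proof.
rewrite mxE big_ord_recl !mxE /= unlift_none mul1r; congr (_ + _).
under eq_bigr => t _ do rewrite !mxE liftK.
rewrite [LHS](reindex (fun a : Defs.arc n => enum_rank a)) /=; last first.
  by apply: onW_bij; exact: enum_rank_bij.
under eq_bigr => a _ do rewrite enum_rankK -ccy_arc -xc_arc mulrC.
rewrite (sum_arc (fun p => ccy y p.1 p.2 * xc (v l) p.1 p.2)).
rewrite [RHS]pair_big /=; rewrite [RHS](bigID (fun p : 'I_n * 'I_n => p.1 != p.2)) /=.
rewrite [X in _ = _ + X]big1 ?addr0 // => p /negPn /eqP ->.
by rewrite ccy_diag mul0r.
Qed.

Definition weakb n (W : relN n) : bool :=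
  [&& [forall i, W (i, i)],
      [forall i, forall j, forall k, W (i, j) ==> W (j, k) ==> W (i, k)] &
      [forall i, forall j, W (i, j) || W (j, i)]].

Lemma weakP n (W : relN n) : reflect (is_weak_order W) (weakb W).
Proof.
apply: (iffP idP).
  case/and3P => /forallP h1 /forallP h2 /forallP h3; split; [|split].
  - by move=> i; apply: h1.
  - move=> i j k a b; have /forallP/(_ j)/forallP/(_ k) := h2 i.
    by rewrite a b.
  - by move=> i j; have /forallP := h3 i; apply.
case=> h1 [h2 h3]; apply/and3P; split.
- by apply/forallP.
- apply/forallP => i; apply/forallP => j; apply/forallP => k.
  by apply/implyP => a; apply/implyP => b; apply: h2 a b.
- by apply/forallP => i; apply/forallP => j; apply: h3.
Qed.

Lemma P_charvec (R : realFieldType) n (W : relN n) :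
  is_weak_order W -> WO_polytope (charvec R W).
Proof.
move=> hW; exists (fun W' => (W' == W)%:R); split; [|split; [|split]].
- by move=> W'; apply: ler0n.
- by move=> W' nW; case: eqP => // e; rewrite e in nW.
- by rewrite (bigD1 W) //= eqxx big1 ?addr0 // => W' /negbTE ->.
- move=> a; rewrite (bigD1 W) //= eqxx mul1r big1 ?addr0 // => W' /negbTE ->.
  by rewrite mul0r.
Qed.

Lemma valid (R : realFieldType) n (i1 i2 : 'I_n) (x : point R n) :
  (4 <= n)%N -> i1 != i2 -> WO_polytope x -> fF i1 i2 x <= f0 R n.
Proof.
move=> h4 h12 [lam [l0 [lw [l1 lx]]]].
have xcE : forall u v, xc x u v = \sum_W lam W * xc (charvec R W) u v.
  move=> u v; case: (eqVneq u v) => [->|h].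
    by rewrite xc_diag big1 // => W _; rewrite xc_diag mulr0.
  rewrite /xc insubT /= lx; apply: eq_bigr => W _; by [].
have -> : fF i1 i2 x = \sum_W lam W * fF i1 i2 (charvec R W).
  rewrite fLin.
  under eq_bigr => u _ do under eq_bigr => v _ do rewrite xcE mulr_sumr.
  under eq_bigr => u _ do rewrite exchange_big /=.
  rewrite exchange_big /=; apply: eq_bigr => W _.
  rewrite fLin mulr_sumr; apply: eq_bigr => u _; rewrite mulr_sumr; apply: eq_bigr => v _.
  by rewrite mulrCA.
have -> : f0 R n = \sum_W lam W * f0 R n by rewrite -mulr_suml l1 mul1r.
apply: ler_sum => W _.
case: (weakP W) => hW; last by rewrite lw // !mul0r.
apply: ler_wpM2l => //.
have := fG (charvec R W) h4 h12; have := GG_le0 R h12 hW; lra.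
Qed.

Lemma sum_pic (R : realFieldType) n (i1 i2 : 'I_n) (cc : 'I_n -> 'I_n -> R) (l : R) (x : point R n) :
  (forall u v, cc u v = l * pic R i1 i2 u v) ->
  \sum_u \sum_w cc u w * xc x u w = l * fF i1 i2 x.
Proof.
move=> H; rewrite fLin mulr_sumr; apply: eq_bigr => u _; rewrite mulr_sumr.
by apply: eq_bigr => w _; rewrite H mulrA.
Qed.

Unset Implicit Arguments.

Theorem mainTheorem11 (R : realFieldType) (n : nat) (i1 i2 : 'I_n) :
  (4 <= n)%N -> i1 != i2 ->
  is_facet (@WO_polytope R n)
    (fun x : point R n =>
       \sum_(j : 'I_n | (j != i1) && (j != i2))
          (xc x i1 j + xc x j i1 + xc x j i2)
       - xc x i1 i2
       - \sum_(j : 'I_n | (j != i1) && (j != i2))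
           \sum_(j' : 'I_n | [&& j' != i1, j' != i2 & j != j']) xc x j j')
    (3 - ((n - 4) * (n - 5))%:R / 2).
Proof.
move=> h4 h12.
change (is_facet (@WO_polytope R n) (fF i1 i2) (f0 R n)).
have h21 : i2 != i1 by rewrite eq_sym.
have [j /andP[hj1 hj2]] := exC h4 h12.
have [j' /and3P[hk1 hk2 hjk]] := exC2 h4 h12 hj1 hj2.
pose W0 := WR (rk i1 i2 j j' 0 1 2 9).
pose Ws := WR (rk i1 i2 j j' 0 5 1 2).
have W0w : is_weak_order W0 := WR_wo _.
have Wsw : is_weak_order Ws := WR_wo _.
have F0 : fF i1 i2 (charvec R W0) = f0 R n.
  have := fG (charvec R W0) h4 h12; rewrite GG_rk //= ?mulr0n ?mulr1n; lra.
have Fs : fF i1 i2 (charvec R Ws) = f0 R n - 2.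
  have := fG (charvec R Ws) h4 h12; rewrite GG_rk //= ?mulr0n ?mulr1n; lra.
split; [|split; [|split]].
- by move=> x Px; apply: valid.
- by exists (charvec R W0); split; [exact: P_charvec|].
- by exists (charvec R Ws); split; [exact: P_charvec|rewrite Fs; lra].
exists #|Defs.arc n|; split.
  split.
    pose vA := fun l : 'I_#|relN n| =>
      if weakb (enum_val l) then charvec R (enum_val l) else charvec R W0.
    have : (#|Defs.arc n|.+1 <= \rank (homs vA))%N.
      apply: rank_from_ker0 => y hy.
      have Hy : forall W, is_weak_order W ->
          \sum_u \sum_w ccy y u w * xc (charvec R W) u w = - y 0 ord0.
        move=> W hW; have := congr1 (fun M : 'M[R]_(_, 1) => M (enum_rank W) 0) hy.
        rewrite homs_y mxE /vA enum_rankK.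
        by case: weakP => // _ e; lra.
      have [Hc Hc0] := core h4 h12 (ccy_diag y) (fun W hW _ => Hy W hW).
      have p0 : ccy y i1 i2 = 0.
        have := Hy Ws Wsw; rewrite (sum_pic _ Hc) Fs => e.
        have : ccy y i1 i2 * 2 = 0 by lra.
        by move/eqP; rewrite mulf_eq0 pnatr_eq0 orbF => /eqP.
      apply/rowP => k; rewrite mxE.
      case: (unliftP ord0 k) => [t ->|->].
        by rewrite -[t]enum_valK -ccy_arc Hc p0 oppr0 mul0r.
      by move: Hc0; rewrite p0 oppr0 mul0r => /eqP; rewrite oppr_eq0 => /eqP.
    case/aff_from_rank => g ag.
    exists (fun i => vA (g i)); split => // i.
    by rewrite /vA; case: weakP => h; apply: P_charvec.
  by move=> v _; apply: no_big_aff.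
pose vF := fun l : 'I_#|relN n| =>
  if weakb (enum_val l) && (GG i1 i2 (charvec R (enum_val l)) == 0)
  then charvec R (enum_val l) else charvec R W0.
pose ys : 'rV[R]_(#|Defs.arc n|).+1 :=
  \row_k (if unlift ord0 k is Some t then
            pic R i1 i2 (val (enum_val t)).1 (val (enum_val t)).2 else - f0 R n).
have : (#|Defs.arc n| <= \rank (homs vF))%N.
  apply: (rank_from_ker (y0 := ys)) => y hy.
  have Hy : forall W, is_weak_order W -> GG i1 i2 (charvec R W) = 0 ->
      \sum_u \sum_w ccy y u w * xc (charvec R W) u w = - y 0 ord0.
    move=> W hW hG; have := congr1 (fun M : 'M[R]_(_, 1) => M (enum_rank W) 0) hy.
    rewrite homs_y mxE /vF enum_rankK.
    have -> : weakb W && (GG i1 i2 (charvec R W) == 0) by apply/andP; split; [apply/weakP|apply/eqP].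
    by move=> e; lra.
  have [Hc Hc0] := core h4 h12 (ccy_diag y) Hy.
  exists (- ccy y i1 i2); apply/rowP => k; rewrite !mxE.
  case: (unliftP ord0 k) => [t ->|->].
    by rewrite -[t]enum_valK -ccy_arc Hc enum_valK.
  lra.
case/aff_from_rank => g ag.
exists (fun i => vF (g i)); split => // i.
rewrite /vF; case: ifP => [/andP[/weakP hW /eqP hG]|_].
  split; first exact: P_charvec.
  by have := fG (charvec R (enum_val (g i))) h4 h12; rewrite hG; lra.
by split; [exact: P_charvec|].
Qed.
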